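(* Let $D=(-1,1)$, $\nu=1/2$, and $\phi_j(t)=e^{\mathrm{i}j\pi t}$, $j\in\mathbb Z$. Let $T=\{t_n\}_{n=1}^N\subseteq[-1,1]$ be a set of $N$ points such that $t_nP\in\mathbb Z$ for some $P\in\mathbb N$ and all $n=1,\dots,N$. Let $U=\{\phi_j(t_n)\}_{n=1,\dots,N,\ j\in\mathbb Z}$ and $y\in\mathbb C^N$, and suppose $\hat x\in\ell^1(\mathbb Z)$ is a solution of $$\inf_{z\in\ell^1(\mathbb Z)}\|z\|_1\quad\text{subject to } Uz=y.$$ Then for every $k\in\mathbb Z$, the element $z\in\ell^1(\mathbb Z)$ given by $z_i=\hat x_{i-2kP}$, $i\in\mathbb Z$, is also a solution of this problem.
   Context: $U$ is viewed as the linear map $\ell^1(\mathbb Z)\to\mathbb C^N$, $(Uz)_n=\sum_{j\in\mathbb Z}z_j e^{\mathrm i j\pi t_n}$; $\|z\|_1=\sum_{j\in\mathbb Z}|z_j|$. *)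

(* Defs.v *)
From Stdlib Require Import Reals ZArith.
From Coquelicot Require Import Coquelicot.
Open Scope R_scope.

Definition phi (j : Z) (t : R) : C :=
  (cos (IZR j * PI * t), sin (IZR j * PI * t)).

(* The two one-sided halves of a Z-indexed family: j >= 0 and j <= -1. *)
Definition posZ {A} (a : Z -> A) (n : nat) : A := a (Z.of_nat n).
Definition negZ {A} (a : Z -> A) (n : nat) : A := a (- Z.of_nat (S n))%Z.

Definition ell1 (z : Z -> C) : Prop :=
  ex_series (posZ (fun j => Cmod (z j))) /\
  ex_series (negZ (fun j => Cmod (z j))).

Definition norm1 (z : Z -> C) : R :=
  Series (posZ (fun j => Cmod (z j))) + Series (negZ (fun j => Cmod (z j))).

(* sum over Z of a complex family (meaningful for absolutely summable families),
   computed componentwise on real and imaginary parts *)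
Definition sumZ (a : Z -> C) : C :=
  (Series (posZ (fun j => Re (a j))) + Series (negZ (fun j => Re (a j))),
   Series (posZ (fun j => Im (a j))) + Series (negZ (fun j => Im (a j)))).

Definition Uop (t : nat -> R) (z : Z -> C) (n : nat) : C :=
  sumZ (fun j => Cmult (z j) (phi j (t n))).

Definition feasible (N : nat) (t : nat -> R) (y : nat -> C) (z : Z -> C) : Prop :=
  ell1 z /\ forall n, (n < N)%nat -> Uop t z n = y n.

Definition is_solution (N : nat) (t : nat -> R) (y : nat -> C) (x : Z -> C) : Prop :=
  feasible N t y x /\ forall z, feasible N t y z -> norm1 x <= norm1 z.

(* Main.v *)
Require Import Defs.
From Stdlib Require Import Reals ZArith Lia Lra FunctionalExtensionality.
From Coquelicot Require Import Coquelicot.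
Open Scope R_scope.

Definition halves (a : Z -> R) : Prop :=
  ex_series (posZ a) /\ ex_series (negZ a).
Definition sumR (a : Z -> R) : R := Series (posZ a) + Series (negZ a).
Definition shift (s : Z) {A} (a : Z -> A) : Z -> A := fun j => a (j - s)%Z.

Lemma shift1 (a : Z -> R) : halves a ->
  halves (shift 1 a) /\ sumR (shift 1 a) = sumR a.
Proof.
  intros [Hp Hn].
  assert (Ep : forall n, posZ (shift 1 a) (S n) = posZ a n).
  { intro n; unfold posZ, shift; f_equal; lia. }
  assert (Ep0 : posZ (shift 1 a) 0%nat = negZ a 0%nat).
  { unfold posZ, negZ, shift; f_equal; try lia. }
  assert (En : forall n, negZ (shift 1 a) n = negZ a (S n)).
  { intro n; unfold negZ, shift; f_equal; lia. }
  assert (Hp' : ex_series (posZ (shift 1 a))).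
  { apply ex_series_incr_1. apply (ex_series_ext (posZ a)); try (intro; now rewrite Ep); auto. }
  assert (Hn1 : ex_series (fun k => negZ a (S k))) by (apply (proj1 (ex_series_incr_1 _)); assumption).
  assert (Hn' : ex_series (negZ (shift 1 a))).
  { apply (ex_series_ext (fun k => negZ a (S k))); auto. }
  split; [split; auto|].
  unfold sumR. rewrite (Series_incr_1 _ Hp'), (Series_incr_1 _ Hn).
  rewrite Ep0. rewrite (Series_ext (fun k => posZ (shift 1 a) (S k)) (posZ a)) by apply Ep.
  rewrite (Series_ext (negZ (shift 1 a)) (fun k => negZ a (S k))) by apply En.
  ring.
Qed.

Lemma shiftm1 (a : Z -> R) : halves a ->
  halves (shift (-1) a) /\ sumR (shift (-1) a) = sumR a.
Proof.
  intros [Hp Hn].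
  assert (En : forall n, negZ (shift (-1) a) (S n) = negZ a n).
  { intro n; unfold negZ, shift; f_equal; lia. }
  assert (En0 : negZ (shift (-1) a) 0%nat = posZ a 0%nat).
  { unfold posZ, negZ, shift; f_equal; try lia. }
  assert (Ep : forall n, posZ (shift (-1) a) n = posZ a (S n)).
  { intro n; unfold posZ, shift; f_equal; lia. }
  assert (Hn' : ex_series (negZ (shift (-1) a))).
  { apply ex_series_incr_1. apply (ex_series_ext (negZ a)); try (intro; now rewrite En); auto. }
  assert (Hp1 : ex_series (fun k => posZ a (S k))) by (apply (proj1 (ex_series_incr_1 _)); assumption).
  assert (Hp' : ex_series (posZ (shift (-1) a))).
  { apply (ex_series_ext (fun k => posZ a (S k))); auto. }
  split; [split; auto|].
  unfold sumR. rewrite (Series_incr_1 _ Hn'), (Series_incr_1 _ Hp).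
  rewrite En0. rewrite (Series_ext (fun k => negZ (shift (-1) a) (S k)) (negZ a)) by apply En.
  rewrite (Series_ext (posZ (shift (-1) a)) (fun k => posZ a (S k))) by apply Ep.
  ring.
Qed.

Lemma shift_nat (d : Z) (Hd : d = 1%Z \/ d = (-1)%Z) (k : nat) : forall a, halves a ->
  halves (shift (Z.of_nat k * d) a) /\ sumR (shift (Z.of_nat k * d) a) = sumR a.
Proof.
  induction k as [|k IH]; intros a Ha.
  - unfold shift. simpl.
    replace (fun j => a (j - 0)%Z) with a
      by (apply functional_extensionality; intro; f_equal; lia). auto.
  - replace (shift (Z.of_nat (S k) * d) a) with (shift d (shift (Z.of_nat k * d) a))
      by (apply functional_extensionality; intro; unfold shift; f_equal; lia).
    destruct (IH a Ha) as [H1 H2].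
    destruct Hd; subst d.
    + destruct (shift1 _ H1) as [H3 H4]. split; auto. congruence.
    + destruct (shiftm1 _ H1) as [H3 H4]. split; auto. congruence.
Qed.

Lemma shift_Z (s : Z) a : halves a -> halves (shift s a) /\ sumR (shift s a) = sumR a.
Proof.
  intro Ha. destruct (Z_le_gt_dec 0 s).
  - replace s with (Z.of_nat (Z.to_nat s) * 1)%Z by lia. apply shift_nat; auto.
  - replace s with (Z.of_nat (Z.to_nat (- s)) * (-1))%Z by lia. apply shift_nat; auto.
Qed.

Lemma cos_periodZ x (z : Z) : cos (x + 2 * IZR z * PI) = cos x.
Proof.
  destruct (Z_le_gt_dec 0 z).
  - replace z with (Z.of_nat (Z.to_nat z)) by lia. rewrite <- INR_IZR_INZ. apply cos_period.
  - set (k := Z.to_nat (- z)).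
    rewrite <- (cos_period (x + 2 * IZR z * PI) k). f_equal.
    unfold k. rewrite INR_IZR_INZ. rewrite Z2Nat.id by lia. rewrite opp_IZR. ring.
Qed.

Lemma sin_periodZ x (z : Z) : sin (x + 2 * IZR z * PI) = sin x.
Proof.
  destruct (Z_le_gt_dec 0 z).
  - replace z with (Z.of_nat (Z.to_nat z)) by lia. rewrite <- INR_IZR_INZ. apply sin_period.
  - set (k := Z.to_nat (- z)).
    rewrite <- (sin_period (x + 2 * IZR z * PI) k). f_equal.
    unfold k. rewrite INR_IZR_INZ. rewrite Z2Nat.id by lia. rewrite opp_IZR. ring.
Qed.

Lemma Cmod_phi j t : Cmod (phi j t) = 1.
Proof.
  unfold Cmod, phi; simpl. replace 1 with (sqrt 1) at 3 by apply sqrt_1. f_equal.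
  pose proof (sin2_cos2 (IZR j * PI * t)). unfold Rsqr in H. nra.
Qed.

Lemma halves_le (a b : Z -> R) : (forall j, Rabs (a j) <= b j) -> halves b -> halves a.
Proof.
  intros H [H1 H2]; split.
  - apply (@ex_series_le R_AbsRing R_CompleteNormedModule _ (posZ b)); auto. intro n. apply H.
  - apply (@ex_series_le R_AbsRing R_CompleteNormedModule _ (negZ b)); auto. intro n. apply H.
Qed.

Lemma im_le_Cmod' (c : C) : Rabs (Im c) <= Cmod c.
Proof.
  destruct c as [a b]. unfold Cmod; simpl. rewrite <- sqrt_Rsqr_abs.
  apply sqrt_le_1_alt. unfold Rsqr. nra.
Qed.

Theorem proposition4p1 (N P : nat) (t : nat -> R) (y : nat -> C) (xhat : Z -> C) :
  (forall n, (n < N)%nat -> -1 <= t n <= 1) ->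
  (forall n, (n < N)%nat -> exists m : Z, t n * INR P = IZR m) ->
  is_solution N t y xhat ->
  forall k : Z,
    is_solution N t y (fun i : Z => xhat (i - 2 * k * Z.of_nat P)%Z).
Proof.
  intros _ Hint [[Hl1 Hfe] Hmin] k.
  set (s := (2 * k * Z.of_nat P)%Z).
  change (fun i : Z => xhat (i - s)%Z) with (shift s xhat).
  destruct (shift_Z s (fun j => Cmod (xhat j)) Hl1) as [Hl1' Hnorm].
  assert (Hn : norm1 (shift s xhat) = norm1 xhat) by exact Hnorm.
  split.
  - split; [exact Hl1'|]. intros n Hnl. rewrite <- (Hfe n Hnl).
    destruct (Hint n Hnl) as [m Hm].
    set (c := fun j => Cmult (xhat j) (phi j (t n))).
    assert (Hc : forall j, Cmult (shift s xhat j) (phi j (t n)) = shift s c j).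
    { intro j. unfold c, shift. f_equal. unfold phi.
      assert (E : IZR j * PI * t n = IZR (j - s) * PI * t n + 2 * IZR (k * m) * PI).
      { unfold s. rewrite minus_IZR, !mult_IZR, <- Hm, <- INR_IZR_INZ. ring. }
      rewrite E, cos_periodZ, sin_periodZ. reflexivity. }
    assert (Hcm : forall j, Cmod (c j) = Cmod (xhat j)).
    { intro j. unfold c. rewrite Cmod_mult, Cmod_phi. ring. }
    unfold Uop. fold c.
    rewrite (functional_extensionality _ _ Hc).
    assert (Hre : halves (fun j => Re (c j))).
    { apply (halves_le _ (fun j => Cmod (xhat j))); auto. intro j. rewrite <- Hcm. apply re_le_Cmod. }
    assert (Him : halves (fun j => Im (c j))).
    { apply (halves_le _ (fun j => Cmod (xhat j))); auto. intro j. rewrite <- Hcm. apply im_le_Cmod'. }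
    destruct (shift_Z s _ Hre) as [_ E1].
    destruct (shift_Z s _ Him) as [_ E2].
    unfold sumZ. unfold sumR in E1, E2. f_equal; [exact E1 | exact E2].
  - intros z Hz. rewrite Hn. now apply Hmin.
Qed.
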